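(* Let $\varphi=\forall x_1\exists y_1\cdots\forall x_k\exists y_k\,P(x_1,y_1,\dots,x_k,y_k)$ be a positive Horn sentence over a finite relational signature $\sigma$, where $P$ is a conjunction of atomic $\sigma$-formulas containing no equalities. Then for every countable (finite or countably infinite) $\sigma$-structure $\mathcal{B}$ with $\mathcal{B}\models\varphi$, there is a surjective homomorphism $h:\mathcal{T}_\varphi(C_\omega)\to\mathcal{B}$ with $h(C_\omega)=B$.
   Context: Let $f_1,\dots,f_k$ be new function symbols, $f_i$ of arity $i$, and let $\mathrm{Sk}(\varphi)=\forall x_1\cdots\forall x_k\,P(x_1,f_1(x_1),\dots,x_k,f_k(x_1,\dots,x_k))$. Let $C_\omega=\{c_1,c_2,\dots\}$ be countably many new constant symbols. $T_\varphi(C_\omega)$ is the set of closed terms built from $C_\omega$ using $f_1,\dots,f_k$. The canonical model $\mathcal{T}_\varphi(C_\omega)$ is the $\sigma$-structure with domain $T_\varphi(C_\omega)$ in which $R(t_1,\dots,t_p)$ holds iff $R(t_1,\dots,t_p)$ is obtained from some atom of the matrix of $\mathrm{Sk}(\varphi)$ by substituting terms of $T_\varphi(C_\omega)$ for $x_1,\dots,x_k$ (function symbols interpreted syntactically). $C_\omega$ is viewed as a subset of $T_\varphi(C_\omega)$. *)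

(* Defs.v *)
From Stdlib Require List.
From mathcomp Require Import all_boot.
Set Implicit Arguments. Unset Strict Implicit. Unset Printing Implicit Defensive.

(* A finite relational signature: a finite type [Sig] of relation symbols
   with arities [ar].  A sigma-structure on a carrier [B] is an
   interpretation [relB : forall R : Sig, ('I_(ar R) -> B) -> Prop]. *)

(* Variables of the matrix P: x_1..x_k and y_1..y_k (0-indexed: Xv i = x_{i+1}). *)
Inductive var (k : nat) : Type := Xv of 'I_k | Yv of 'I_k.

Record atom (Sig : finType) (ar : Sig -> nat) (k : nat) : Type :=
  Atom { asym : Sig; aargs : 'I_(ar asym) -> var k }.

Section Sat.
Variables (Sig : finType) (ar : Sig -> nat) (k : nat) (B : Type).
Variable relB : forall R : Sig, ('I_(ar R) -> B) -> Prop.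

Definition val_env (acc : seq (B * B)) (v : var k) : option B :=
  match v with
  | Xv i => omap fst (onth acc i)
  | Yv i => omap snd (onth acc i)
  end.

Definition matrix_holds (P : seq (atom ar k)) (acc : seq (B * B)) : Prop :=
  forall a, List.In a P ->
    exists vs : 'I_(ar (asym a)) -> B,
      (forall j, val_env acc (@aargs Sig ar k a j) = Some (vs j)) /\ relB vs.

Fixpoint prefix_holds (n : nat) (Q : seq (B * B) -> Prop) (acc : seq (B * B))
  : Prop :=
  match n with
  | 0 => Q acc
  | n'.+1 => forall x : B, exists y : B, prefix_holds n' Q (rcons acc (x, y))
  end.

Definition models_phi (P : seq (atom ar k)) : Prop :=
  prefix_holds k (matrix_holds P) [::].
End Sat.

(* Closed terms T_phi(C_omega): constants c_n (n : nat) and Skolem function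
   symbols f_{i+1} (i : 'I_k) of arity i+1. *)
Inductive term (k : nat) : Type :=
  | Const : nat -> term k
  | App : forall i : 'I_k, ('I_i.+1 -> term k) -> term k.

Section TermModel.
Variables (Sig : finType) (ar : Sig -> nat) (k : nat).

(* Value of a variable in the Skolemized matrix under the substitution
   x_i := s i :  x_{i+1} |-> s i,  y_{i+1} |-> f_{i+1}(s 0, ..., s i). *)
Definition sk (s : 'I_k -> term k) (v : var k) : term k :=
  match v with
  | Xv i => s i
  | Yv i => App (fun j : 'I_i.+1 => s (widen_ord (ltn_ord i) j))
  end.

(* Relations of the canonical model T_phi(C_omega): R(t_1..t_p) holds iff it is
   a substitution instance of some atom of the matrix of Sk(phi). *)
Definition termRel (P : seq (atom ar k)) (R : Sig) (ts : 'I_(ar R) -> term k)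
  : Prop :=
  exists (s : 'I_k -> term k) (a : atom ar k),
    List.In a P /\
    existT (fun R' => 'I_(ar R') -> term k) (asym a) (fun j => sk s (@aargs Sig ar k a j))
    = existT (fun R' => 'I_(ar R') -> term k) R ts.
End TermModel.

(* Main.v *)
Require Import Defs.
From Stdlib Require Import ClassicalEpsilon FunctionalExtensionality.
From mathcomp Require Import all_boot.

Set Implicit Arguments.
Section Aux.
Variable B : Type.
Variable Y : seq (B * B) -> B -> B.

Fixpoint buildAux (acc : seq (B * B)) (xs : seq B) : seq (B * B) :=
  match xs with
  | [::] => acc
  | x :: xs' => buildAux (rcons acc (x, Y acc x)) xs'
  end.

Definition build xs := buildAux [::] xs.

Lemma buildAux_rcons acc xs x :
  buildAux acc (rcons xs x) = rcons (buildAux acc xs) (x, Y (buildAux acc xs) x).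
Proof. by elim: xs acc => [|y xs IH] acc //=. Qed.

Lemma build_rcons xs x : build (rcons xs x) = rcons (build xs) (x, Y (build xs) x).
Proof. exact: buildAux_rcons. Qed.

Lemma size_build xs : size (build xs) = size xs.
Proof. by elim/last_ind: xs => [|xs x IH] //; rewrite build_rcons !size_rcons IH. Qed.

Lemma onth_rcons (T : Type) (s : seq T) x n :
  onth (rcons s x) n = if n < size s then onth s n else if n == size s then Some x else None.
Proof.
elim: s n => [|y s IH] [|n] //=; try by case: n.
Qed.

Lemma onth_build x0 xs i :
  onth (build xs) i = if i < size xs then
     Some (nth x0 xs i, Y (build (take i xs)) (nth x0 xs i)) else None.
Proof.
elim/last_ind: xs i => [|xs x IH] i; first by rewrite /= onth0n.
rewrite build_rcons onth_rcons size_build IH size_rcons.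
case: (ltngtP i (size xs)) => Hi.
- by rewrite ltnS (ltnW Hi) nth_rcons Hi -cats1 takel_cat // ltnW.
- by rewrite ltnS leqNgt Hi.
by rewrite Hi ltnSn nth_rcons ltnn eqxx -cats1 take_size_cat.
Qed.
End Aux.

Lemma take_mkseq_eq (T : Type) (f g : nat -> T) i n : i <= n ->
  (forall j, j < i -> f j = g j) -> take i (mkseq f n) = mkseq g i.
Proof.
move=> Hin Hfg; rewrite /mkseq -map_take take_iota (minn_idPl Hin).
apply/eq_in_map => j; rewrite mem_iota add0n => /andP[_ Hj]; exact: Hfg.
Qed.


Theorem mainTheorem9 (Sig : finType) (ar : Sig -> nat) (k : nat)
    (P : seq (atom ar k))
    (B : Type) (relB : forall R : Sig, ('I_(ar R) -> B) -> Prop) :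
  inhabited B ->
  (exists f : B -> nat, injective f) ->
  @models_phi Sig ar k B relB P ->
  exists h : term k -> B,
    (forall (R : Sig) (ts : 'I_(ar R) -> term k),
        @termRel Sig ar k P R ts -> relB R (fun j => h (ts j))) /\
    (forall b : B, exists t : term k, h t = b) /\
    (forall b : B, exists n : nat, h (Const k n) = b).
Proof.
move=> inhB [f finj] Hm.
have [b0] := inhB.
set Q := matrix_holds relB P.
pose Y (acc : seq (B * B)) (x : B) : B :=
  epsilon inhB (fun y => prefix_holds (k - (size acc).+1) Q (rcons acc (x, y))).
pose e (n : nat) : B := epsilon inhB (fun b => f b = n).
pose G (i : nat) (v : 'I_i.+1 -> B) : B :=
  Y (build Y (mkseq (fun j => v (inord j)) i)) (v ord_max).
pose h := fix h (t : term k) : B :=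
  match t with
  | Const n => e n
  | App i args => G i (fun j => h (args j))
  end.
have He : forall b, h (Const k (f b)) = b.
  move=> b /=; apply: finj; rewrite /e.
  by apply: (epsilon_spec inhB (fun b' => f b' = f b)); exists b.
have Hpre : forall xs, size xs <= k -> prefix_holds (k - size xs) Q (build Y xs).
  elim/last_ind => [|xs x IH]; first by rewrite subn0.
  rewrite size_rcons => Hs.
  have := IH (ltnW Hs).
  rewrite (_ : k - size xs = (k - (size xs).+1).+1); last by rewrite subnSK.
  move=> /(_ x) Hex.
  rewrite build_rcons /Y size_build.
  exact: (epsilon_spec inhB (fun y => prefix_holds (k - (size xs).+1) Q (rcons (build Y xs) (x, y))) Hex).
exists h; split; last first.
  split=> b; [exists (Const k (f b)) | exists (f b)]; exact: He.
move=> R ts [s [a [Ha Heq]]].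
pose sv (j : nat) : B := if @insub _ (fun j => j < k) 'I_k j is Some o then h (s o) else b0.
have Hsv : forall o : 'I_k, sv o = h (s o) by move=> o; rewrite /sv valK.
pose xs := mkseq sv k.
have Hsz : size xs = k by rewrite size_mkseq.
have HQ : Q (build Y xs).
  have := Hpre xs (eq_leq Hsz). by rewrite Hsz subnn.
have [vs [Hvs Hrel]] := HQ a Ha.
have Hval : forall v, val_env (build Y xs) v = Some (h (sk s v)).
  case=> i /=; rewrite (onth_build Y b0) Hsz ltn_ord /= /xs nth_mkseq //=.
    by rewrite Hsv.
  rewrite /G; congr (Some (Y (build Y _) _)).
    apply: take_mkseq_eq; first exact: ltnW.
    move=> j Hj /=.
    by rewrite -Hsv /= inordK // ltnW.
  by rewrite -Hsv.
have Hvs' : vs = (fun j => h (sk s (@aargs Sig ar k a j))).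
  apply: functional_extensionality => j.
  by have := Hvs j; rewrite Hval => -[->].
have : (fun p : {R' : Sig & 'I_(ar R') -> term k} =>
          relB (projT1 p) (fun j => h (projT2 p j)))
        (existT (fun R' => 'I_(ar R') -> term k) (asym a) (fun j => sk s (@aargs Sig ar k a j))).
  by rewrite /= -Hvs'.
by rewrite Heq.
Qed.
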